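(* Let $\mathring B_1,\dots,\mathring B_k$ be open Euclidean balls in $\mathbb R^d$, let $B_j$ denote the closed ball with the same center and radius as $\mathring B_j$ ($j\in[k]$), and let $B_c$ be a closed Euclidean ball in $\mathbb R^d$. Let $P$ be a set of representative points of intersections with respect to the family $\{B_c,B_1,\dots,B_k\}$. For any subfamily $\{\mathring B_{i_1},\dots,\mathring B_{i_r}\}\subseteq\{\mathring B_1,\dots,\mathring B_k\}$, let $P'=\{x\in\mathbb R^d: x\in B_c \text{ and } x\notin\mathring B_j \text{ for all } j\in\{i_1,\dots,i_r\}\}$. If $P'\neq\emptyset$, then $P\cap P'\neq\emptyset$.
   Context: For a family of closed Euclidean balls in $\mathbb R^d$, denote by $S_j$ the boundary sphere of ball $j$. A set $P\subseteq\mathbb R^d$ is a set of representative points of intersections for the family if for every subfamily $F$ with $|F|\le d$: (i) if $\bigcap_{j\in F}S_j$ is connected, then $P$ contains a point of $\bigcap_{j\in F}S_j$; and (ii) if $\bigcap_{j\in F}S_j$ contains at most two points, then $P$ contains $\bigcap_{j\in F}S_j$. *)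

(* Defs.v *)
(* Points of R^d are row vectors 'rV[R]_d
   (the topology on matrices is the product topology = Euclidean topology). *)
From HB Require Import structures.
From mathcomp Require Import all_boot all_order all_algebra.
From mathcomp Require Import all_classical all_reals all_analysis.
Set Implicit Arguments. Unset Strict Implicit. Unset Printing Implicit Defensive.
Import Order.TTheory GRing.Theory Num.Theory.
Import numFieldNormedType.Exports.
Local Open Scope ring_scope.
Local Open Scope classical_set_scope.

Section Balls.
Variables (R : realType) (d : nat).

Definition sqdist (x y : 'rV[R]_d) : R := \sum_(i < d) (x ord0 i - y ord0 i) ^+ 2.

Definition closed_ball_E (c : 'rV[R]_d) (r : R) : set 'rV[R]_d :=
  [set x | sqdist x c <= r ^+ 2].
Definition open_ball_E (c : 'rV[R]_d) (r : R) : set 'rV[R]_d :=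
  [set x | sqdist x c < r ^+ 2].
Definition sphere_E (c : 'rV[R]_d) (r : R) : set 'rV[R]_d :=
  [set x | sqdist x c = r ^+ 2].

Definition sphere_inter (I : finType) (c : I -> 'rV[R]_d) (r : I -> R)
  (F : {set I}) : set 'rV[R]_d :=
  [set x | forall j, j \in F -> sphere_E (c j) (r j) x].

(* P is a set of representative points of intersections for the family of
   closed balls (c j, r j), j : I.  "Connected" is taken to include
   non-emptiness (standard convention). *)
Definition rep_points (I : finType) (c : I -> 'rV[R]_d) (r : I -> R)
  (P : set 'rV[R]_d) : Prop :=
  forall F : {set I}, (#|F| <= d)%N ->
    ((sphere_inter c r F !=set0 /\ connected (sphere_inter c r F)) ->
        exists2 x, P x & sphere_inter c r F x) /\
    ((exists a b : 'rV[R]_d, sphere_inter c r F `<=` [set a; b]) ->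
        sphere_inter c r F `<=` P).

End Balls.

(* Main.v *)
Require Import Defs.
From HB Require Import structures.
From mathcomp Require Import all_boot all_order all_algebra.
From mathcomp Require Import all_classical all_reals all_analysis.
From mathcomp Require Import ring lra zify.
Import Order.TTheory GRing.Theory Num.Theory.
Import numFieldNormedType.Exports.
Set Implicit Arguments. Unset Strict Implicit. Unset Printing Implicit Defensive.
Local Open Scope ring_scope.
Local Open Scope classical_set_scope.

Section Alg.
Variables (R : realType) (d : nat).
Implicit Types (u v w x y : 'rV[R]_d).

Definition dot u v : R := \sum_(i < d) u ord0 i * v ord0 i.

Lemma dotC u v : dot u v = dot v u.
Proof. by apply: eq_bigr => i _; rewrite mulrC. Qed.

Lemma dotDl u v w : dot (u + v) w = dot u w + dot v w.
Proof. rewrite /dot -big_split; apply: eq_bigr => i _; by rewrite !mxE mulrDl. Qed.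

Lemma dotNl u w : dot (- u) w = - dot u w.
Proof. rewrite /dot -sumrN; apply: eq_bigr => i _; rewrite !mxE; ring. Qed.

Lemma dotBl u v w : dot (u - v) w = dot u w - dot v w.
Proof. by rewrite dotDl dotNl. Qed.

Lemma dotZl (a : R) u w : dot (a *: u) w = a * dot u w.
Proof. rewrite /dot mulr_sumr; apply: eq_bigr => i _; rewrite !mxE; ring. Qed.

Lemma dotDr u v w : dot w (u + v) = dot w u + dot w v.
Proof. by rewrite dotC dotDl !(dotC w). Qed.
Lemma dotBr u v w : dot w (u - v) = dot w u - dot w v.
Proof. by rewrite dotC dotBl !(dotC w). Qed.
Lemma dotZr (a : R) u w : dot w (a *: u) = a * dot w u.
Proof. by rewrite dotC dotZl dotC. Qed.

Lemma sqdistE x y : sqdist x y = dot (x - y) (x - y).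
Proof. rewrite /sqdist /dot; apply: eq_bigr => i _; rewrite !mxE; ring. Qed.

Lemma dot_ge0 u : 0 <= dot u u.
Proof. by apply: sumr_ge0 => i _; rewrite -expr2 sqr_ge0. Qed.

Lemma dot_eq0 u : dot u u = 0 -> u = 0.
Proof.
move=> /eqP; rewrite psumr_eq0; last by move=> i _; rewrite -expr2 sqr_ge0.
move=> /allP H; apply/matrixP => i j; rewrite !mxE (ord1 i).
have := H j (mem_index_enum j); rewrite /= mulf_eq0 orbb => /eqP ->; done.
Qed.

Lemma sqdist_diff x x0 c c0 :
  sqdist x c - sqdist x0 c = sqdist x c0 - sqdist x0 c0 - 2 * dot (x - x0) (c - c0).
Proof.
rewrite /sqdist /dot -!sumrB mulr_sumr -sumrB; apply: eq_bigr => i _; rewrite !mxE; ring.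
Qed.

Lemma sphere_diff x x0 c c0 r r0 :
  sqdist x c0 = r0 ^+ 2 -> sqdist x0 c0 = r0 ^+ 2 -> sqdist x0 c = r ^+ 2 ->
  (sqdist x c = r ^+ 2 <-> dot (x - x0) (c - c0) = 0).
Proof.
move=> h1 h2 h3; have := sqdist_diff x x0 c c0; rewrite h1 h2 h3 subrr sub0r.
move=> E; split=> [h|h].
  by move: E; rewrite h subrr => /esym /eqP; rewrite oppr_eq0 mulf_eq0 pnatr_eq0 /= => /eqP.
by move: E; rewrite h mulr0 oppr0 => /eqP; rewrite subr_eq0 => /eqP.
Qed.

Lemma sqdist_expand p q (s : R) : dot (p + s *: q) (p + s *: q) =
  dot p p + 2 * s * dot p q + s ^+ 2 * dot q q.
Proof. rewrite !dotDl !dotDr !dotZl !dotZr (dotC q p); ring. Qed.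


Lemma subr_chain (x y z : 'rV[R]_d) : (y - z) + (x - y) = x - z.
Proof. by rewrite addrC addrA subrK. Qed.

Lemma half_lemma q b c (r : R) : sqdist q c = r ^+ 2 -> sqdist b c = r ^+ 2 ->
  2 * dot (q - c) (b - q) = - dot (b - q) (b - q).
Proof.
rewrite !sqdistE -(subr_chain b q c) => h1.
rewrite dotDl !(dotDr (q - c) (b - q)) h1 (dotC (b - q) (q - c)) => /eqP.
rewrite -subr_eq0 => /eqP h; apply/eqP; rewrite -subr_eq0 -h; apply/eqP; ring.
Qed.

Lemma coll (a b e c : 'rV[R]_d) (r al be : R) :
  sqdist a c = r ^+ 2 -> sqdist b c = r ^+ 2 -> sqdist e c = r ^+ 2 ->
  a <> b -> a <> e -> b <> e -> al *: (b - a) + be *: (e - a) = 0 ->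
  al = 0 /\ be = 0.
Proof.
move=> ha hb he nab nae nbe hl.
have hu0 : b - a != 0 by rewrite subr_eq0; apply/eqP => /esym.
have hv0 : e - a != 0 by rewrite subr_eq0; apply/eqP => /esym.
have Hu := half_lemma ha hb; have Hv := half_lemma ha he.
have hB : dot (e - a) (e - a) != 0 by apply: contra hv0 => /eqP /dot_eq0 ->.
have hal : al = 0.
  apply/eqP; apply/negPn/negP => hal.
  set s := - (be / al).
  have hu : b - a = s *: (e - a).
    apply: (scalerI hal); rewrite scalerA /s mulrN mulrCA mulfV // mulr1.
    by apply/eqP; rewrite scaleNr -addr_eq0 hl.
  rewrite hu dotZl !dotZr in Hu.
  have E : s * (s - 1) * dot (e - a) (e - a) =
     s * (- dot (e - a) (e - a)) - (- (s * (s * dot (e - a) (e - a)))) by ring.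
  rewrite -Hv -Hu in E.
  have : s * (s - 1) * dot (e - a) (e - a) = 0 by rewrite E; ring.
  move/eqP; rewrite !mulf_eq0 (negbTE hB) orbF => /orP [] /eqP hs.
    by move: hu0; rewrite hu hs scale0r eqxx.
  apply: nbe; move: hu; rewrite (subr0_eq hs) scale1r.
  by move/(congr1 (fun z => z + a)); rewrite !subrK.
split=> //; move: hl; rewrite hal scale0r add0r => /eqP.
by rewrite scaler_eq0 (negbTE hv0) orbF => /eqP.
Qed.

Lemma cont_poly (a0 a1 a2 : R) : continuous (fun t : R => a0 + a1 * t + a2 * t ^+ 2).
Proof.
move=> t.
have c1 : {for t, continuous (fun t : R => a1 * t)}.
  exact: (@continuousM _ _ (fun _ => a1) (fun t => t) t (@cst_continuous _ _ a1 t) cvg_id).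
have c2 : {for t, continuous (fun t : R => a2 * t ^+ 2)}.
  have c3 : {for t, continuous (fun t : R => t ^+ 2)}.
    exact: (@continuousM _ _ (fun t => t) (fun t => t) t cvg_id cvg_id).
  exact: (@continuousM _ _ (fun _ : R => a2) (fun s : R => s ^+ 2) t (@cst_continuous _ _ a2 t) c3).
have c0 : {for t, continuous (fun t : R => a0 + a1 * t)}.
  exact: (@continuousD _ _ _ (fun _ => a0) (fun t => a1 * t) t (@cst_continuous _ _ a0 t) c1).
exact: (@continuousD _ _ _ (fun t => a0 + a1 * t) (fun t => a2 * t ^+ 2) t c0 c2).
Qed.

Lemma cont_poly' (f : R -> R) (a0 a1 a2 : R) :
  (forall t, f t = a0 + a1 * t + a2 * t ^+ 2) -> continuous f.
Proof.
move=> hf; have -> : f = (fun t : R => a0 + a1 * t + a2 * t ^+ 2).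
  by apply: funext => t; exact: hf.
exact: cont_poly.
Qed.

Lemma dot_w (u v : 'rV[R]_d) (t : R) :
  dot ((1 - t) *: u + t *: v) ((1 - t) *: u + t *: v) =
  dot u u + (2 * dot u v - 2 * dot u u) * t + (dot u u + dot v v - 2 * dot u v) * t ^+ 2.
Proof. rewrite !dotDl !dotDr !dotZl !dotZr (dotC v u); ring. Qed.

Definition Nn (u v : 'rV[R]_d) (t : R) := dot u u + (dot v v - dot u u) * t + 0 * t ^+ 2.
Definition Dn (u v : 'rV[R]_d) (t : R) :=
  dot u u + (2 * dot u v - 2 * dot u u) * t + (dot u u + dot v v - 2 * dot u v) * t ^+ 2.
Definition wv (u v : 'rV[R]_d) (t : R) := (1 - t) *: u + t *: v.
Definition phi (q u v : 'rV[R]_d) (t : R) := q + (Nn u v t / Dn u v t) *: wv u v t.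

Lemma phi_cont q u v t : Dn u v t != 0 -> {for t, continuous (phi q u v)}.
Proof.
move=> hD.
have cN : continuous (Nn u v) by apply: (@cont_poly' _ (dot u u) (dot v v - dot u u) 0).
have cD : continuous (Dn u v) by apply: cont_poly'.
have c1 : continuous (fun s : R => 1 - s) by apply: (@cont_poly' _ 1 (-1) 0) => s; ring.
have cl : {for t, continuous (fun s => Nn u v s / Dn u v s)}.
  exact: (@continuousM _ _ (Nn u v) (fun s => (Dn u v s)^-1) t (cN t) (continuousV hD (cD t))).
have cw : {for t, continuous (wv u v)}.
  exact: (@continuousD _ _ _ (fun s : R => (1 - s) *: u) (fun s : R => s *: v) t
     (@continuousZr_tmp _ _ _ (fun s : R => 1 - s) u t (c1 t))
     (@continuousZr_tmp _ _ _ (fun s : R => s) v t cvg_id)).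
have cZ := @continuousZ _ _ _ (fun s => Nn u v s / Dn u v s) (wv u v) t cl cw.
exact: (@continuousD _ _ _ (fun _ : R => q) (fun s => (Nn u v s / Dn u v s) *: wv u v s) t
   (@cst_continuous _ _ q t) cZ).
Qed.

Lemma phi_in q b e c0 (r0 t : R) :
  sqdist q c0 = r0 ^+ 2 -> sqdist b c0 = r0 ^+ 2 -> sqdist e c0 = r0 ^+ 2 ->
  Dn (b - q) (e - q) t != 0 -> sqdist (phi q (b - q) (e - q) t) c0 = r0 ^+ 2.
Proof.
move=> hq hb he hD.
have hX := half_lemma hq hb; have hY := half_lemma hq he.
have hDw : dot (wv (b - q) (e - q) t) (wv (b - q) (e - q) t) = Dn (b - q) (e - q) t.
  by rewrite /wv dot_w.
rewrite sqdistE /phi.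
have -> : q + Nn (b - q) (e - q) t / Dn (b - q) (e - q) t *: wv (b - q) (e - q) t - c0 =
   (q - c0) + Nn (b - q) (e - q) t / Dn (b - q) (e - q) t *: wv (b - q) (e - q) t.
  by rewrite addrAC.
rewrite sqdist_expand hDw -sqdistE hq /wv dotDr !dotZr.
move: hD hX hY; rewrite /Nn /Dn.
set A := dot (b - q) (b - q); set B := dot (e - q) (e - q); set C := dot (b - q) (e - q).
set X := dot (q - c0) (b - q); set Y := dot (q - c0) (e - q).
move=> hD hX hY.
have -> : X = - A / 2 by rewrite -hX; field.
have -> : Y = - B / 2 by rewrite -hY; field.
by field.
Qed.

End Alg.

Section Fam.
Variables (R : realType) (d : nat) (I : finType) (cI : I -> 'rV[R]_d) (rI : I -> R).
Local Notation S F := (sphere_inter cI rI F).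

Lemma conn_of (A : set 'rV[R]_d) p0 : A p0 ->
  (forall x, A x -> exists K, [/\ connected K, K `<=` A, K p0 & K x]) -> connected A.
Proof.
move=> Ap0 hK.
have -> : A = connected_component A p0.
  apply/seteqP; split; last exact: connected_component_sub.
  move=> x Ax; have [K [cK KA Kp0 Kx]] := hK x Ax.
  exact: (connected_component_max Kp0 KA cK Kx).
exact: component_connected.
Qed.

Lemma itv01_0 : `[0, 1] (0 : R).
Proof. by rewrite /= in_itv /= lexx ler01. Qed.
Lemma itv01_1 : `[0, 1] (1 : R).
Proof. by rewrite /= in_itv /= lexx ler01. Qed.

Lemma path_sphere (F : {set I}) j (q b e : 'rV[R]_d) : j \in F -> S F q -> S F b -> S F e ->
  q <> b -> q <> e -> b <> e -> exists K, [/\ connected K, K `<=` S F, K b & K e].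
Proof.
move=> hj hq hb he nqb nqe nbe.
have hD : forall t, Dn (b - q) (e - q) t != 0.
  move=> t; apply/eqP => h0.
  have : wv (b - q) (e - q) t = 0 by apply: dot_eq0; rewrite /wv dot_w -h0 /Dn.
  rewrite /wv => /(coll (hq j hj) (hb j hj) (he j hj) nqb nqe nbe) [h1 h2].
  by move: h1; rewrite h2 subr0 => /eqP; rewrite oner_eq0.
have hA : dot (b - q) (b - q) != 0.
  apply/eqP => /dot_eq0 /eqP; rewrite subr_eq0 => /eqP h; exact: nqb.
have hB : dot (e - q) (e - q) != 0.
  apply/eqP => /dot_eq0 /eqP; rewrite subr_eq0 => /eqP h; exact: nqe.
exists (phi q (b - q) (e - q) @` `[0, 1]); split.
- apply: connected_continuous_connected; first exact: segment_connected.
  by apply: continuous_subspaceT => t; exact: phi_cont.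
- move=> _ [t _ <-] j' hj'.
  exact: phi_in (hq j' hj') (hb j' hj') (he j' hj') (hD t).
- exists 0; first exact: itv01_0.
  have h1 : Nn (b - q) (e - q) 0 = dot (b - q) (b - q) by rewrite /Nn; ring.
  have h2 : Dn (b - q) (e - q) 0 = dot (b - q) (b - q) by rewrite /Dn; ring.
  by rewrite /phi h1 h2 mulfV // scale1r /wv subr0 scale1r scale0r addr0 addrC subrK.
- exists 1; first exact: itv01_1.
  have h1 : Nn (b - q) (e - q) 1 = dot (e - q) (e - q) by rewrite /Nn; ring.
  have h2 : Dn (b - q) (e - q) 1 = dot (e - q) (e - q) by rewrite /Dn; ring.
  by rewrite /phi h1 h2 mulfV // scale1r /wv subrr scale1r scale0r add0r addrC subrK.
Qed.

Lemma conn_all (A : set 'rV[R]_d) : (forall x, A x) -> connected A.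
Proof.
move=> hA; apply: (@conn_of _ 0) => // x _.
exists ((fun t : R => t *: x) @` `[0, 1]); split.
- apply: connected_continuous_connected; first exact: segment_connected.
  apply: continuous_subspaceT => t.
  exact: (@continuousZr_tmp _ _ _ (fun s : R => s) x t cvg_id).
- by [].
- by exists 0; [exact: itv01_0 | rewrite scale0r].
- by exists 1; [exact: itv01_1 | rewrite scale1r].
Qed.

Lemma conn_S (F : {set I}) : F = finset.set0 \/ ((exists j, j \in F) /\
  exists p1 p2 p3, [/\ S F p1, S F p2, S F p3 & [/\ p1 <> p2, p1 <> p3 & p2 <> p3]]) ->
  connected (S F).
Proof.
case=> [-> | [[j hj] [p1 [p2 [p3 [h1 h2 h3 [n12 n13 n23]]]]]]].
  by apply: conn_all => x i; rewrite finset.in_set0.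
apply: (@conn_of _ p1) => // x hx.
have [-> | nx] := pselect (x = p1).
  by exists [set p1]; split => //; [exact: connected1 | move=> y ->].
have [q [hq nq1 nqx]] : exists q, [/\ S F q, q <> p1 & q <> x].
  have [e2 | n2x] := pselect (p2 = x).
    by exists p3; split => //; [move=> e; apply: n13 | move=> e; apply: n23; rewrite e2 -e].
  by exists p2; split => // e; apply: n12.
have [K [cK KS K1 Kx]] := path_sphere hj hq h1 hx nq1 nqx (fun e => nx (esym e)).
by exists K.
Qed.

End Fam.

Section Red.
Variables (R : realType) (d : nat) (I : finType) (cI : I -> 'rV[R]_d) (rI : I -> R).
Local Notation S F := (sphere_inter cI rI F).

Lemma sub_S (F0 F : {set I}) : F0 \subset F -> S F `<=` S F0.
Proof. by move=> /fintype.subsetP sF x hx j hj; apply: hx; apply: sF. Qed.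

Lemma no3_pair (A : set 'rV[R]_d) :
  ~ (exists p1 p2 p3, [/\ A p1, A p2, A p3 & [/\ p1 <> p2, p1 <> p3 & p2 <> p3]]) ->
  exists a b, A `<=` [set a; b].
Proof.
move=> h.
have [[p1 h1]|] := pselect (exists p, A p); last first.
  by move=> h0; exists 0, 0 => x Ax; exfalso; apply: h0; exists x.
have [[p2 [h2 n12]]|] := pselect (exists p, A p /\ p1 <> p).
  exists p1, p2 => x Ax.
  have [->|n1] := pselect (x = p1); first by left.
  have [->|n2] := pselect (x = p2); first by right.
  by exfalso; apply: h; exists p1, p2, x; split => //; split => // e; [apply: n1|apply: n2].
move=> h0; exists p1, p1 => x Ax; left.
have [//|n] := pselect (x = p1).
by exfalso; apply: h0; exists x; split => // e; apply: n.
Qed.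

Definition Mv m (v : 'I_m -> 'rV[R]_d) : 'M[R]_(m, d) := \matrix_(i, l) v i ord0 l.

Lemma Mw_eq m (v : 'I_m -> 'rV[R]_d) w i : (Mv v *m w^T) i ord0 = dot (v i) w.
Proof. by rewrite !mxE; apply: eq_bigr => l _; rewrite !mxE. Qed.

Lemma lin_comb m (v : 'I_m -> 'rV[R]_d) (al : 'rV[R]_m) w :
  al *m Mv v = 0 -> \sum_i al ord0 i * dot (v i) w = 0.
Proof.
move=> h; have := congr1 (fun X => (X *m w^T) ord0 ord0) h.
rewrite /= mul0mx -mulmxA [LHS]mxE [RHS]mxE => E.
rewrite -[RHS]E; apply: eq_bigr => i _.
by rewrite Mw_eq.
Qed.

Lemma orth0 m (v : 'I_m -> 'rV[R]_d) w :
  row_full (Mv v) -> (forall i, dot (v i) w = 0) -> w = 0.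
Proof.
move=> /row_fullP [B hB] h.
have h0 : Mv v *m w^T = 0.
  by apply/matrixP => i j; rewrite (ord1 j) Mw_eq h mxE.
have : w^T = 0 by rewrite -[w^T]mul1mx -hB -mulmxA h0 mulmx0.
by move/(congr1 trmx); rewrite trmxK trmx0.
Qed.

Lemma ker_vec m (M : 'M[R]_(m, d)) : ~~ row_free M ->
  exists al : 'rV[R]_m, exists i1, al ord0 i1 != 0 /\ al *m M = 0.
Proof.
rewrite -kermx_eq0 => hK.
have [i hi] : exists i, row i (kermx M) != 0.
  apply/existsP; apply: contraR hK => /existsPn h.
  apply/eqP/row_matrixP => i; rewrite row0; apply/eqP; by move: (h i); rewrite negbK.
have [i1 h1] : exists i1, row i (kermx M) ord0 i1 != 0.
  apply/existsP; apply: contraR hi => /existsPn h.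
  by apply/eqP/matrixP => a b; rewrite (ord1 a) [RHS]mxE; apply/eqP; move: (h b); rewrite negbK.
exists (row i (kermx M)), i1; split => //.
by rewrite -row_mul mulmx_ker row0.
Qed.


Lemma ortho (F : {set I}) j0 (hj0 : j0 \in F) x0 (hx0 : S F x0)
  (i1 : 'I_#|F :\ j0|) p :
  S (F :\ enum_val i1) p -> forall i, i != i1 ->
  dot (cI (enum_val i) - cI j0) (p - x0) = 0.
Proof.
move=> hp i ni.
have := enum_valP i; rewrite in_setD1 => /andP [ne0 hiF].
have := enum_valP i1; rewrite in_setD1 => /andP [ne1 h1F].
have hj0' : j0 \in F :\ enum_val i1 by rewrite in_setD1 hj0 andbT eq_sym.
have hiG : enum_val i \in F :\ enum_val i1.
  by rewrite in_setD1 hiF andbT; apply: contra ni => /eqP /enum_val_inj ->.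
rewrite dotC; apply: (sphere_diff (hp j0 hj0') (hx0 j0 hj0) (hx0 _ hiF)).1.
exact: hp _ hiG.
Qed.

Lemma red n : forall (F : {set I}) x0, (#|F| <= n)%N -> S F x0 ->
  exists F0 : {set I}, [/\ F0 \subset F, (#|F0| <= d)%N, S F0 x0 &
    (S F0 `<=` S F \/ exists a b, S F0 `<=` [set a; b])].
Proof.
elim: n => [|n IH] F x0 hF hx0; have [hd|hd] := leqP #|F| d.
- by exists F; split => //; left.
- by move: (leq_trans hd hF); rewrite ltn0.
- by exists F; split => //; left.
have [j0 hj0] : exists j0, j0 \in F.
  by apply/set0Pn; rewrite -card_gt0; exact: leq_ltn_trans (leq0n d) hd.
set F' := F :\ j0.
have hF' : #|F| = #|F'|.+1 by rewrite (cardsD1 j0 F) hj0.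
set v := fun i : 'I_#|F'| => cI (enum_val i) - cI j0.
case: (boolP (row_free (Mv v))) => hfree.
  have hrk : #|F'| = d.
    have := rank_leq_col (Mv v); move: hfree; rewrite /row_free => /eqP ->.
    by move: hd; rewrite hF'; lia.
  have hfull : row_full (Mv v).
    by rewrite /row_full; move: hfree; rewrite /row_free => /eqP ->; rewrite hrk.
  have [d0|dpos] := posnP d.
    exists finset.set0; split.
    - exact: finset.sub0set.
    - by rewrite cards0.
    - by move=> j; rewrite finset.in_set0.
    - right; exists x0, x0 => y _; left; apply/matrixP => i j.
      by case: j => jv hjv; exfalso; move: hjv; rewrite d0.
  have hpos : (0 < #|F'|)%N by rewrite hrk.
  set i1 := Ordinal hpos; set j1 := enum_val i1.
  have := enum_valP i1; rewrite -/j1 in_setD1 => /andP [ne10 hj1F].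
  have hj0' : j0 \in F :\ j1 by rewrite in_setD1 hj0 andbT eq_sym.
  exists (F :\ j1); split.
  - exact: subsetDl.
  - by move: hF'; rewrite (cardsD1 j1 F) hj1F hrk; lia.
  - exact: (sub_S (subsetDl F [set j1]) hx0).
  right; apply: no3_pair => -[p1 [p2 [p3 [h1 h2 h3 [n12 n13 n23]]]]].
  have o := @ortho F j0 hj0 x0 hx0 i1.
  set w1 := p2 - p1; set w2 := p3 - p1.
  have ow1 : forall i, i != i1 -> dot (v i) w1 = 0.
    move=> i ni; have -> : w1 = (p2 - x0) - (p1 - x0) by rewrite /w1 opprB addrA subrK.
    by rewrite dotBr (o p2 h2 i ni) (o p1 h1 i ni) subr0.
  have ow2 : forall i, i != i1 -> dot (v i) w2 = 0.
    move=> i ni; have -> : w2 = (p3 - x0) - (p1 - x0) by rewrite /w2 opprB addrA subrK.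
    by rewrite dotBr (o p3 h3 i ni) (o p1 h1 i ni) subr0.
  set b1 := dot (v i1) w1; set b2 := dot (v i1) w2.
  have hw : b2 *: w1 + (- b1) *: w2 = 0.
    apply: (orth0 hfull) => i; rewrite dotDr !dotZr.
    case: (eqVneq i i1) => [->|ni]; first by rewrite -/b1 -/b2; ring.
    by rewrite ow1 // ow2 //; ring.
  have hs := fun p (hp : S (F :\ j1) p) => hp j0 hj0'.
  have [e2 e1] := coll (hs _ h1) (hs _ h2) (hs _ h3) n12 n13 n23 hw.
  have : w1 = 0.
    apply: (orth0 hfull) => i; case: (eqVneq i i1) => [->|ni]; last exact: ow1.
    by rewrite -/b1 -[b1]opprK e1 oppr0.
  by move/eqP; rewrite subr_eq0 => /eqP e; apply: n12; rewrite e.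
have [al [i1 [hal hM]]] := ker_vec hfree.
set j1 := enum_val i1.
have := enum_valP i1; rewrite -/j1 in_setD1 => /andP [ne10 hj1F].
have hj0' : j0 \in F :\ j1 by rewrite in_setD1 hj0 andbT eq_sym.
have hsub : S (F :\ j1) `<=` S F.
  move=> y hy j hj; case: (eqVneq j j1) => [->|nj]; last by apply: hy; rewrite in_setD1 nj hj.
  have o := @ortho F j0 hj0 x0 hx0 i1 y hy.
  have hsum := lin_comb (y - x0) hM.
  rewrite (bigD1 i1) //= big1 ?addr0 in hsum; last by move=> i ni; rewrite o // mulr0.
  have hd0 : dot (v i1) (y - x0) = 0.
    by move/eqP: hsum; rewrite mulf_eq0 (negbTE hal) => /eqP.
  apply: (sphere_diff (hy j0 hj0') (hx0 j0 hj0) (hx0 j1 hj1F)).2.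
  by rewrite dotC.
have hcard : (#|F :\ j1| <= n)%N by move: hF; rewrite (cardsD1 j1 F) hj1F; lia.
have [F0 [s0 c0 x0F0 hor]] := IH (F :\ j1) x0 hcard (sub_S (subsetDl F [set j1]) hx0).
exists F0; split => //; first exact: fintype.subset_trans s0 (subsetDl F [set j1]).
case: hor => [h|h]; last by right.
by left => y hy; apply: hsub; apply: h.
Qed.

End Red.

Section Topo.
Variables (R : realType) (d : nat).

Lemma cont_sum (l : seq 'I_d) (f : 'I_d -> 'rV[R]_d -> R) :
  (forall i, continuous (f i)) -> continuous (fun z => \sum_(i <- l) f i z).
Proof.
move=> hf; elim: l => [|a l IH].
  have -> : (fun z => \sum_(i <- [::]) f i z) = (fun _ => 0).
    by apply: funext => z; rewrite big_nil.
  exact: cst_continuous.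
have -> : (fun z => \sum_(i <- a :: l) f i z) = (fun z => f a z + \sum_(i <- l) f i z).
  by apply: funext => z; rewrite big_cons.
move=> z; exact: (@continuousD _ _ _ (f a) (fun z => \sum_(i <- l) f i z) z (hf a z) (IH z)).
Qed.

Lemma cont_sq (c : 'rV[R]_d) : continuous (fun z : 'rV[R]_d => sqdist z c).
Proof.
rewrite /sqdist; apply: (@cont_sum _ (fun i z => (z ord0 i - c ord0 i) ^+ 2)) => i z.
have h1 : {for z, continuous (fun z : 'rV[R]_d => z ord0 i - c ord0 i)}.
  exact: (@continuousB _ _ _ (fun z : 'rV[R]_d => z ord0 i) (fun _ => c ord0 i) z
    (@coord_continuous R 1 d ord0 i z) (@cst_continuous _ _ _ z)).
exact: (@continuousM _ _ (fun z : 'rV[R]_d => z ord0 i - c ord0 i)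
   (fun z : 'rV[R]_d => z ord0 i - c ord0 i) z h1 h1).
Qed.

Lemma open_sq_gt (c : 'rV[R]_d) a : open [set z : 'rV[R]_d | a < sqdist z c].
Proof.
have h := (@open_comp _ _ (fun z => sqdist z c) [set x | a < x]
  (fun z _ => cont_sq (c:=c) (x:=z)) (open_gt (y:=a))).
exact h.
Qed.

Lemma open_sq_lt (c : 'rV[R]_d) a : open [set z : 'rV[R]_d | sqdist z c < a].
Proof.
have h := (@open_comp _ _ (fun z => sqdist z c) [set x | x < a]
  (fun z _ => cont_sq (c:=c) (x:=z)) (open_lt (y:=a))).
exact h.
Qed.

Lemma closed_sq_le (c : 'rV[R]_d) a : closed [set z : 'rV[R]_d | sqdist z c <= a].
Proof.
have -> : [set z : 'rV[R]_d | sqdist z c <= a] = ~` [set z | a < sqdist z c].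
  by apply/seteqP; split => z /=; rewrite leNgt => /negP.
exact/open_closedC/open_sq_gt.
Qed.

Lemma open_list (T : eqType) (l : seq T) (cond : T -> set 'rV[R]_d) :
  (forall j, open (cond j)) -> open [set z | forall j, j \in l -> cond j z].
Proof.
move=> hc; elim: l => [|a l IH].
  have -> : [set z : 'rV[R]_d | forall j, j \in [::] -> cond j z] = setT.
    by apply/seteqP; split => // z _ j; rewrite in_nil.
  exact: openT.
have -> : [set z | forall j, j \in a :: l -> cond j z] =
   cond a `&` [set z | forall j, j \in l -> cond j z].
  apply/seteqP; split => z /=.
    by move=> h; split; [apply: h; rewrite mem_head | move=> j hj; apply: h; rewrite in_cons hj orbT].
  by move=> [h1 h2] j; rewrite in_cons => /orP [/eqP ->|]; [exact: h1|exact: h2].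
exact: openI.
Qed.

End Topo.

Unset Implicit Arguments.
Set Strict Implicit.

Theorem lemma3 (R : realType) (d k : nat)
  (c : 'I_k -> 'rV[R]_d) (r : 'I_k -> R) (hr : forall j, 0 < r j)
  (cc : 'rV[R]_d) (rc : R) (hrc : 0 < rc)
  (P : set 'rV[R]_d)
  (hP : rep_points (fun o : option 'I_k => if o is Some j then c j else cc)
                   (fun o : option 'I_k => if o is Some j then r j else rc) P)
  (J : {set 'I_k}) :
  let P' := [set x | closed_ball_E cc rc x /\
                     forall j, j \in J -> ~ open_ball_E (c j) (r j) x] in
  P' !=set0 -> exists2 x, P x & P' x.
Proof.
move=> P' [x0 hx0].
set C := (fun o : option 'I_k => if o is Some j then c j else cc) in hP.
set Rr := (fun o : option 'I_k => if o is Some j then r j else rc) in hP.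
have closedP' : closed P'.
  have -> : P' = [set z | sqdist z cc <= rc ^+ 2] `&`
      \bigcap_(j in [set j | j \in J]) (~` [set z | sqdist z (c j) < r j ^+ 2]).
    by apply/seteqP; split => z [h1 h2]; split => // j hj; apply: h2.
  apply: closedI; first exact: closed_sq_le.
  by apply: closed_bigI => j _; apply: open_closedC; exact: open_sq_lt.
have step : forall (F : {set option 'I_k}) x, sphere_inter C Rr F x -> P' x ->
    (exists2 y, P y & P' y) \/
    (exists g z, g \notin F /\ sphere_inter C Rr (g |: F) z /\ P' z).
  move=> F x hx hPx.
  have [F0 [s0 c0 hx0F hor]] := @red R d _ C Rr _ F x (leqnn _) hx.
  have hP0 := hP F0 c0.
  have pair_case : (exists a b, sphere_inter C Rr F0 `<=` [set a; b]) ->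
      exists2 y, P y & P' y.
    by move=> hab; exists x => //; apply: (hP0.2 hab).
  case: hor => [hsub|hab]; last by left; exact: pair_case.
  have [h3|n3] := pselect (exists p1 p2 p3, [/\ sphere_inter C Rr F0 p1,
      sphere_inter C Rr F0 p2, sphere_inter C Rr F0 p3 & [/\ p1 <> p2, p1 <> p3 & p2 <> p3]]);
    last by left; apply: pair_case; exact: no3_pair.
  have hcon : connected (sphere_inter C Rr F0).
    apply: conn_S; have [->|/set0Pn hne] := eqVneq F0 finset.set0; first by left.
    by right; split.
  have [y hPy hy] := hP0.1 (conj (ex_intro _ x hx0F) hcon).
  have [hPy'|nPy'] := pselect (P' y); first by left; exists y.
  have [hb|nb] := pselect (exists g z, [/\ g \notin F, sphere_inter C Rr F z, P' z,
      (g = None \/ exists2 j, g = Some j & j \in J) & sqdist z (C g) = Rr g ^+ 2]).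
    right; have [g [z [hg hz hPz _ hsg]]] := hb; exists g, z; split => //; split => //.
    by move=> j; rewrite in_setU1 => /orP [/eqP ->|hj]; [exact: hsg|exact: hz].
  exfalso; apply: nPy'.
  set A := sphere_inter C Rr F0.
  set O := [set z : 'rV[R]_d | None \notin F -> sqdist z cc < rc ^+ 2] `&`
     [set z | forall j, j \in enum 'I_k -> (j \in J) && (Some j \notin F) -> r j ^+ 2 < sqdist z (c j)].
  have hAF : A `<=` sphere_inter C Rr F := hsub.
  have hBO : A `&` P' = A `&` O.
    apply/seteqP; split => z [hAz hPz]; split => //.
    - split.
        move=> hN; have := hPz.1; rewrite /closed_ball_E /= le_eqVlt => /orP [/eqP e|//].
        by exfalso; apply: nb; exists None, z; split => //; [exact: hAF|left].
      move=> j _ /andP [hj hjF]; have := hPz.2 j hj; rewrite /open_ball_E /= => /negP.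
      rewrite -leNgt le_eqVlt => /orP [/eqP e|//].
      by exfalso; apply: nb; exists (Some j), z; split => //; [exact: hAF|right; exists j].
    - split.
        rewrite /closed_ball_E /=.
        case: (boolP (None \in F)) => hN; last by apply/ltW; apply: hPz.1.
        by have := hAF z hAz None hN; rewrite /sphere_E /= => ->.
      move=> j hj; rewrite /open_ball_E /=.
      case: (boolP (Some j \in F)) => hjF.
        by have := hAF z hAz (Some j) hjF; rewrite /sphere_E /= => ->; rewrite ltxx.
      have := hPz.2 j (mem_enum _ j); rewrite hj hjF => /(_ isT) h.
      by apply/negP; rewrite -leNgt ltW.
  have openO : open O.
    apply: openI.
      case: (boolP (None \in F)) => hN.
        rewrite (_ : [set z | _] = setT); first exact: openT.
        by apply/seteqP; split => // z _; rewrite /= hN.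
      rewrite (_ : [set z | _] = [set z | sqdist z cc < rc ^+ 2]); first exact: open_sq_lt.
      by apply/seteqP; split => z /=; [apply| move=> h _].
    apply: (open_list (l := enum 'I_k) (cond := fun j => [set z | (j \in J) && (Some j \notin F) -> r j ^+ 2 < sqdist z (c j)])) => j.
    case: (boolP ((j \in J) && (Some j \notin F))) => hj.
      rewrite (_ : [set z | _] = [set z | r j ^+ 2 < sqdist z (c j)]); first exact: open_sq_gt.
      by apply/seteqP; split => z /=; [apply| move=> h _].
    rewrite (_ : [set z | _] = setT); first exact: openT.
    by apply/seteqP; split => // z _; rewrite /= (negbTE hj).
  have := hcon (A `&` P') (ex_intro _ x (conj hx0F hPx)) (ex_intro2 _ _ O openO hBO)
     (ex_intro2 _ _ P' closedP' erefl).
  move=> hE; have : (A `&` P') y by rewrite hE.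
  by case.
suff main : forall n (F : {set option 'I_k}), (#|~: F| <= n)%N ->
    (exists x, sphere_inter C Rr F x /\ P' x) -> exists2 y, P y & P' y.
  apply: (main #|~: finset.set0| finset.set0) => //.
  by exists x0; split => // j; rewrite finset.in_set0.
elim=> [|n IH] F hn [x [hx hPx]]; case: (step F x hx hPx) => // -[g [z [hg [hz hPz]]]].
  have e : #|~: F| = (#|~: (g |: F)|).+1.
    rewrite (cardsD1 g (~: F)) finset.in_setC hg; congr (_.+1); apply: eq_card => y.
    by rewrite !inE negb_or.
  by move: hn; rewrite e.
have e : #|~: F| = (#|~: (g |: F)|).+1.
  rewrite (cardsD1 g (~: F)) finset.in_setC hg; congr (_.+1); apply: eq_card => y.
  by rewrite !inE negb_or.
apply: (IH (g |: F)); last by exists z.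
by move: hn; rewrite e.
Qed.
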